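(* Let $d\ge2$, $\bm{\theta}=(\theta_1,\dots,\theta_d),\bm{\xi}=(\xi_1,\dots,\xi_d)\in\mathbb{R}^d$, and let $C_{\bm\theta,\bm\xi}$ be the conjugation on $H^2(\mathbb{D}^d)$ given by \[ C_{\bm\theta,\bm\xi}\Big(\sum_{\bm{k}\in\mathbb{Z}_+^d}a_{\bm{k}}z^{\bm{k}}\Big)=\exp\Big(i\sum_{j=1}^d\xi_j\Big)\sum_{\bm{k}\in\mathbb{Z}_+^d}\overline{a_{\bm{k}}}\exp\Big(-i\sum_{j=1}^dk_j\theta_j\Big)z^{\bm{k}}. \] Let $\varphi=\sum_{\bm{k}\in\mathbb{Z}^d}\varphi(\bm{k})z^{\bm{k}}\in L^\infty(\mathbb{T}^d)$. Then $T_\varphi$ is $C_{\bm\theta,\bm\xi}$-symmetric if and only if \[ \exp\Big(i\sum_{j=1}^dk_j\theta_j\Big)\varphi(\bm{k})=\varphi(-\bm{k})\qquad(\bm{k}\in\mathbb{Z}^d). \]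
   Context: A conjugation is an anti-linear, involutive, isometric map; $T$ is $C$-symmetric if $CT^*C=T$. $H^2(\mathbb{D}^d)$ is the Hardy space over the polydisc, viewed as the closed subspace of $L^2(\mathbb{T}^d)$ with orthonormal basis $\{z^{\bm{k}}\}_{\bm{k}\in\mathbb{Z}_+^d}$, $z^{\bm{k}}=z_1^{k_1}\cdots z_d^{k_d}$. For $\varphi\in L^\infty(\mathbb{T}^d)$ with Fourier coefficients $\varphi(\bm{k})$, $T_\varphi f=P_{H^2(\mathbb{D}^d)}(\varphi f)$. *)

(* Defs.v *)
From mathcomp Require Import all_boot all_algebra.
From mathcomp Require Import all_classical all_reals all_analysis.
From mathcomp Require Import complex.
From mathcomp Require Import finmap.
Set Implicit Arguments. Unset Strict Implicit. Unset Printing Implicit Defensive.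
Import GRing.Theory Num.Theory numFieldNormedType.Exports.
Local Open Scope ring_scope.
Local Open Scope classical_set_scope.

Definition totally {I : choiceType} : set_system {fset I} :=
  filter_from setT (fun A => [set B | (A `<=` B)%fset]).

Definition partial_sum {R : realType} {I : choiceType} (x : I -> R)
  (A : {fset I}) : R := \sum_(i <- A) x i.

Definition rsum {R : realType} {I : choiceType} (x : I -> R) : R :=
  lim (partial_sum x @ totally).

Definition csum {R : realType} {I : choiceType} (x : I -> R[i]) : R[i] :=
  (rsum (fun i => complex.Re (x i)) +i* rsum (fun i => complex.Im (x i)))%C.

Definition sqn {R : realType} (z : R[i]) : R :=
  complex.Re z ^+ 2 + complex.Im z ^+ 2.

Definition expi {R : realType} (x : R) : R[i] := (cos x +i* sin x)%C.

Definition mnat (d : nat) := {ffun 'I_d -> nat}.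
Definition mint (d : nat) := {ffun 'I_d -> int}.

Definition mint_of_nat {d : nat} (n : mnat d) : mint d := [ffun j => (n j)%:Z].
Definition msub {d : nat} (k l : mint d) : mint d := [ffun j => k j - l j].
Definition mopp {d : nat} (k : mint d) : mint d := [ffun j => - k j].

Definition mdot {R : realType} {d : nat} (k : mint d) (theta : 'I_d -> R) : R :=
  \sum_(j < d) (k j)%:~R * theta j.

(* ---------- H^2(D^d) via its orthonormal basis {z^k : k in Z_+^d} ----------
   An element f = sum_k a_k z^k of H^2(D^d) is represented by its
   coefficient family a : Z_+^d -> C, which is square summable. *)

Definition H2vec {R : realType} (d : nat) := mnat d -> R[i].

Definition in_H2 {R : realType} {d : nat} (f : @H2vec R d) : Prop :=
  exists M : R, forall J : {fset mnat d}, \sum_(k <- J) sqn (f k) <= M.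

Definition inner {R : realType} {d : nat} (f g : @H2vec R d) : R[i] :=
  csum (fun k => f k * (g k)^*%C).

Definition Cthxi {R : realType} {d : nat} (theta xi : 'I_d -> R)
  (f : @H2vec R d) : @H2vec R d :=
  fun k => expi (\sum_(j < d) xi j) * (f k)^*%C
             * expi (- mdot (mint_of_nat k) theta).

(* ---------- symbols in L^infty(T^d) and Toeplitz operators ----------
   A symbol phi in L^infty(T^d) is represented by its Fourier coefficient
   family c = (phi(k))_{k in Z^d}.  Through the Fourier (Plancherel) unitary
   L^2(T^d) ~ l^2(Z^d), multiplication by phi becomes the Laurent operator
   a |-> (sum_m c(n-m) a_m)_n, and phi is in L^infty exactly when this
   operator is bounded on l^2(Z^d) (then ||M_phi|| = ||phi||_infty). *)
Definition Linfty_coeffs {R : realType} {d : nat} (c : mint d -> R[i]) : Prop :=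
  exists M : R, forall (a : mint d -> R[i]) (J K : {fset mint d}),
    \sum_(n <- K) sqn (\sum_(m <- J) c (msub n m) * a m)
      <= M * \sum_(m <- J) sqn (a m).

(* T_phi f = P_{H^2}(phi f): its k-th coefficient (k in Z_+^d) is
   sum_{m in Z_+^d} phi(k - m) a_m *)
Definition toeplitz {R : realType} {d : nat} (c : mint d -> R[i])
  (f : @H2vec R d) : @H2vec R d :=
  fun n => csum (fun m => c (msub (mint_of_nat n) (mint_of_nat m)) * f m).

Definition is_adjoint {R : realType} {d : nat} (T S : @H2vec R d -> @H2vec R d)
  : Prop :=
  (forall g, in_H2 g -> in_H2 (S g)) /\
  (forall f g, in_H2 f -> in_H2 g -> inner (T f) g = inner f (S g)).

Definition C_symmetric {R : realType} {d : nat}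
  (Cj T : @H2vec R d -> @H2vec R d) : Prop :=
  exists Tstar, is_adjoint T Tstar /\
    (forall f, in_H2 f -> Cj (Tstar (Cj f)) = T f).

(* Main.v *)
Require Import Defs.
From mathcomp Require Import all_boot all_algebra.
From mathcomp Require Import all_classical all_reals all_analysis.
From mathcomp Require Import complex.
From mathcomp Require Import finmap.
From mathcomp Require Import ring lra.
Import order.Order.TTheory GRing.Theory Num.Theory numFieldNormedType.Exports.
Local Open Scope ring_scope.
Set Implicit Arguments. Unset Strict Implicit. Unset Printing Implicit Defensive.
Local Open Scope classical_set_scope.

Instance totally_filter {I : choiceType} : ProperFilter (@totally I).
Proof.
eapply filter_from_proper; last by move=> A _; exists A; rewrite /= fsubset_refl.
apply: filter_fromT_filter; first by exists fset0.
by move=> A B /=; exists (A `|` B)%fset => P /=; rewrite fsubUset => /andP[].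
Qed.

Section RS.
Variables (R : realType) (I : choiceType).
Implicit Types (x y : I -> R) (A B : {fset I}).

Lemma near_tot {P : {fset I} -> Prop} A :
  (forall B, (A `<=` B)%fset -> P B) -> \forall B \near totally, P B.
Proof. by move=> H; exists A => // B /= /H. Qed.

Lemma sum_mono y A B : (A `<=` B)%fset -> (forall i, 0 <= y i) ->
  \sum_(i <- A) y i <= \sum_(i <- B) y i.
Proof.
move=> AB y0.
have -> : \sum_(i <- A) y i = \sum_(i <- A) (if i \in A then y i else 0).
  by rewrite big_seq_cond [RHS]big_seq_cond; apply: eq_bigr => i /andP[->].
rewrite (big_fset_incl _ AB); last by move=> i _ /negbTE ->.
by apply: ler_sum => i _; case: ifP.
Qed.

Definition summ x := exists M, forall A, \sum_(i <- A) `|x i| <= M.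

Lemma nonneg_cvg y M : (forall i, 0 <= y i) -> (forall A, \sum_(i <- A) y i <= M) ->
  exists l : R, partial_sum y @ totally --> l.
Proof.
move=> y0 yM.
set E := range (partial_sum y).
have hs : has_sup E.
  split; first by exists (partial_sum y fset0); exists fset0.
  by exists M => _ [A _ <-]; exact: yM.
exists (sup E); apply/cvgrPdist_le => e e0.
have [_ [A0 _ <-] hA0] := sup_adherent e0 hs.
apply: (near_tot (A := A0)) => B AB.
have h1 : partial_sum y B <= sup E by apply: sup_upper_bound => //; exists B.
have h2 : partial_sum y A0 <= partial_sum y B by exact: sum_mono.
rewrite ger0_norm ?subr_ge0 //; lra.
Qed.

Lemma summ_cvg x : summ x -> partial_sum x @ totally --> rsum x.
Proof.
case=> M hM.
have [l1 h1] : exists l : R, partial_sum (fun i => `|x i| + x i) @ totally --> l.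
  apply: (@nonneg_cvg _ (2 * M)) => [i|A].
    by rewrite -lerBlDr sub0r -normrN ler_norm.
  rewrite big_split /=; have := hM A.
  have : \sum_(i <- A) x i <= \sum_(i <- A) `|x i|.
    by apply: ler_sum => i _; exact: ler_norm.
  lra.
have [l2 h2] : exists l : R, partial_sum (fun i => `|x i|) @ totally --> l.
  by apply: (@nonneg_cvg _ M) => // i.
have e : partial_sum x = (partial_sum (fun i => `|x i| + x i)) - (partial_sum (fun i => `|x i|)).
  apply/funext => A /=; rewrite /partial_sum !fctE big_split /=; ring.
have hc : partial_sum x @ totally --> l1 - l2 by rewrite e; apply: cvgB.
by rewrite /rsum (cvg_lim _ hc).
Qed.

Lemma rsum_lim x l : partial_sum x @ totally --> l -> rsum x = l.
Proof. by move=> h; rewrite /rsum (cvg_lim _ h). Qed.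

Lemma summD x y : summ x -> summ y -> summ (x \+ y).
Proof.
move=> [M1 h1] [M2 h2]; exists (M1 + M2) => A.
apply: le_trans (lerD (h1 A) (h2 A)); rewrite -big_split /=.
by apply: ler_sum => i _; exact: ler_normD.
Qed.

Lemma summZ a x : summ x -> summ (fun i => a * x i).
Proof.
move=> [M h]; exists (`|a| * M) => A.
under eq_bigr do rewrite normrM.
by rewrite -mulr_sumr ler_wpM2l.
Qed.

Lemma summ_le x y : (forall i, `|x i| <= `|y i|) -> summ y -> summ x.
Proof.
move=> hxy [M h]; exists M => A; apply: le_trans (h A).
by apply: ler_sum.
Qed.

Lemma summN x : summ x -> summ (fun i => - x i).
Proof. by move=> [M h]; exists M => A; under eq_bigr do rewrite normrN. Qed.

Lemma summB x y : summ x -> summ y -> summ (fun i => x i - y i).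
Proof. by move=> hx hy; apply: (summD hx); exact: summN. Qed.

Lemma rsumD x y : summ x -> summ y -> rsum (x \+ y) = rsum x + rsum y.
Proof.
move=> hx hy; apply: rsum_lim.
have -> : partial_sum (x \+ y) = partial_sum x + partial_sum y.
  by apply/funext => A; rewrite /partial_sum big_split.
apply: cvgD; exact: summ_cvg.
Qed.

Lemma rsumZ a x : summ x -> rsum (fun i => a * x i) = a * rsum x.
Proof.
move=> hx; apply: rsum_lim.
have -> : partial_sum (fun i => a * x i) = (fun A => a * partial_sum x A).
  by apply/funext => A; rewrite /partial_sum mulr_sumr.
apply: cvgMl_tmp; exact: summ_cvg.
Qed.

Lemma rsum_le x M : summ x -> (forall A, \sum_(i <- A) x i <= M) -> rsum x <= M.
Proof.
move=> hx hM; rewrite /rsum; apply: limr_le.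
  by apply/cvg_ex; exists (rsum x); exact: summ_cvg.
by apply: (near_tot (A := fset0)) => B _; exact: hM.
Qed.

Lemma rsum_abs_le x M : (forall A, \sum_(i <- A) `|x i| <= M) -> `|rsum x| <= M.
Proof.
move=> hM; have hx : summ x by exists M.
have hxn : summ (fun i => -1 * x i) by exact: summZ.
have h1 : rsum x <= M.
  apply: rsum_le => // A; apply: le_trans (hM A); apply: ler_sum => i _; exact: ler_norm.
have h2 : rsum (fun i => -1 * x i) <= M.
  apply: rsum_le => // A; apply: le_trans (hM A); apply: ler_sum => i _.
  by rewrite mulN1r -normrN ler_norm.
rewrite rsumZ // in h2.
rewrite ler_norml; lra.
Qed.

Lemma rsum_fin x A0 : (forall i, i \notin A0 -> x i = 0) ->
  rsum x = \sum_(i <- A0) x i.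
Proof.
move=> h; apply: rsum_lim; apply/cvgrPdist_le => e e0.
apply: (near_tot (A := A0)) => B AB.
by rewrite /partial_sum (big_fset_incl _ AB) ?subrr ?normr0 ?ltW // => i _ /h.
Qed.

Lemma cvg_bigsum (T : Type) (L : seq T) (F : T -> {fset I} -> R) (l : T -> R) :
  (forall n, F n @ totally --> l n) ->
  (fun B => \sum_(n <- L) F n B) @ totally --> \sum_(n <- L) l n.
Proof.
move=> h; elim: L => [|a L IH].
  rewrite big_nil; under eq_fun do rewrite big_nil; exact: cvg_cst.
rewrite big_cons; under eq_fun do rewrite big_cons.
exact: cvgD (h a) IH.
Qed.

Lemma cvg_le (f : {fset I} -> R) l M : f @ totally --> l -> (forall B, f B <= M) -> l <= M.
Proof.
move=> h hM.
have := @limr_le _ totally _ R M f.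
rewrite (norm_cvg_lim h); apply => //.
by apply: (near_tot (A := fset0)) => B _; exact: hM.
Qed.

End RS.

Section CX.
Variable R : realType.
Local Notation C := R[i].
Local Open Scope complex_scope.

Lemma cext (z w : C) : complex.Re z = complex.Re w -> complex.Im z = complex.Im w -> z = w.
Proof. by case: z => a b; case: w => c d /= -> ->. Qed.

Lemma ReD (z w : C) : complex.Re (z + w) = complex.Re z + complex.Re w. Proof. by case: z; case: w. Qed.
Lemma ImD (z w : C) : complex.Im (z + w) = complex.Im z + complex.Im w. Proof. by case: z; case: w. Qed.
Lemma ReN (z : C) : complex.Re (- z) = - complex.Re z. Proof. by case: z. Qed.
Lemma ImN (z : C) : complex.Im (- z) = - complex.Im z. Proof. by case: z. Qed.
Lemma ReM (z w : C) : complex.Re (z * w) = complex.Re z * complex.Re w - complex.Im z * complex.Im w. Proof. by case: z; case: w. Qed.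
Lemma ImM (z w : C) : complex.Im (z * w) = complex.Re z * complex.Im w + complex.Im z * complex.Re w.
Proof. by case: z => a b; case: w => c d /=; ring. Qed.
Lemma ReJ (z : C) : complex.Re (conjc z) = complex.Re z. Proof. by case: z. Qed.
Lemma ImJ (z : C) : complex.Im (conjc z) = - complex.Im z. Proof. by case: z. Qed.
Lemma Re0 : complex.Re (0 : C) = 0. Proof. by []. Qed.
Lemma Im0 : complex.Im (0 : C) = 0. Proof. by []. Qed.
Lemma Re1 : complex.Re (1 : C) = 1. Proof. by []. Qed.
Lemma Im1 : complex.Im (1 : C) = 0. Proof. by []. Qed.
Lemma Re_expi (a : R) : complex.Re (expi a) = cos a. Proof. by []. Qed.
Lemma Im_expi (a : R) : complex.Im (expi a) = sin a. Proof. by []. Qed.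

Definition cE := (ReD, ImD, ReN, ImN, ReM, ImM, ReJ, ImJ, Re0, Im0, Re1, Im1, Re_expi, Im_expi).

Lemma Re_sum (T : Type) (s : seq T) (F : T -> C) :
  complex.Re (\sum_(i <- s) F i) = \sum_(i <- s) complex.Re (F i).
Proof. elim: s => [|a s IH]; first by rewrite !big_nil. by rewrite !big_cons ReD IH. Qed.
Lemma Im_sum (T : Type) (s : seq T) (F : T -> C) :
  complex.Im (\sum_(i <- s) F i) = \sum_(i <- s) complex.Im (F i).
Proof. elim: s => [|a s IH]; first by rewrite !big_nil. by rewrite !big_cons ImD IH. Qed.

Lemma sqn_ge0 (z : C) : 0 <= sqn z.
Proof. by rewrite /sqn addr_ge0 // sqr_ge0. Qed.
Lemma sqnM (z w : C) : sqn (z * w) = sqn z * sqn w.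
Proof. rewrite /sqn !cE; ring. Qed.
Lemma sqnJ (z : C) : sqn (conjc z) = sqn z.
Proof. rewrite /sqn !cE; ring. Qed.
Lemma sqn_expi (a : R) : sqn (expi a) = 1.
Proof. by rewrite /sqn !cE cos2Dsin2. Qed.

Lemma expiD (a b : R) : expi (a + b) = expi a * expi b.
Proof. apply: cext; rewrite !cE ?cosD ?sinD; ring. Qed.
Lemma expiJ (a : R) : conjc (expi a) = expi (- a).
Proof. by apply: cext; rewrite !cE ?cosN ?sinN. Qed.
Lemma expiN1 (a : R) : expi a * expi (- a) = 1.
Proof. by rewrite -expiD subrr; apply: cext; rewrite !cE ?cos0 ?sin0. Qed.

Lemma ReM_le (z w : C) (t s : R) : 0 < t -> 0 < s -> t * s = 1 ->
  `|complex.Re (z * w)| <= (t * sqn z + s * sqn w) / 2.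
Proof.
move=> t0 s0 ts.
have h1 : complex.Re (z * w) ^+ 2 <= sqn z * sqn w.
  rewrite -sqnM /sqn lerDl; exact: sqr_ge0.
have hz := sqn_ge0 z; have hw := sqn_ge0 w.
have h2 : sqn z * sqn w <= ((t * sqn z + s * sqn w) / 2) ^+ 2.
  have : 0 <= (t * sqn z - s * sqn w) ^+ 2 by exact: sqr_ge0.
  have e : sqn z * sqn w = (t * s) * (sqn z * sqn w) by rewrite ts mul1r.
  rewrite e; move=> h; nra.
have q0 : 0 <= (t * sqn z + s * sqn w) / 2.
  by apply: divr_ge0 => //; apply: addr_ge0; apply: mulr_ge0 => //; apply: ltW.
set q := (t * sqn z + s * sqn w) / 2 in h2 q0 *.
set p := complex.Re (z * w) in h1 *.
rewrite ler_norml; apply/andP; split; nra.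
Qed.

Lemma ImM_le (z w : C) (t s : R) : 0 < t -> 0 < s -> t * s = 1 ->
  `|complex.Im (z * w)| <= (t * sqn z + s * sqn w) / 2.
Proof.
move=> t0 s0 ts.
have -> : complex.Im (z * w) = complex.Re (z * (w * (- 'i))).
  by rewrite !cE /=; ring.
have h := @ReM_le z (w * (- 'i)) t s t0 s0 ts.
have e : sqn (w * (- 'i)) = sqn w by rewrite sqnM /sqn /=; ring.
by rewrite e in h.
Qed.

End CX.

Section CS.
Variables (R : realType) (I : choiceType).
Local Notation C := R[i].
Local Open Scope complex_scope.
Implicit Types (x y u v : I -> C) (A B : {fset I}).

Definition csumm x := summ (fun i => complex.Re (x i)) /\ summ (fun i => complex.Im (x i)).
Definition l2 u M := forall A, \sum_(i <- A) sqn (u i) <= M.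

Lemma csummD x y : csumm x -> csumm y -> csumm (fun i => x i + y i).
Proof.
move=> [h1 h2] [h3 h4]; split.
  by under eq_fun do rewrite ReD; exact: summD.
by under eq_fun do rewrite ImD; exact: summD.
Qed.

Lemma csumD x y : csumm x -> csumm y -> csum (fun i => x i + y i) = csum x + csum y.
Proof.
move=> [h1 h2] [h3 h4]; apply: cext; rewrite /csum /= ?ReD ?ImD /=.
  by under eq_fun do rewrite ReD; rewrite (rsumD h1 h3).
by under eq_fun do rewrite ImD; rewrite (rsumD h2 h4).
Qed.

Lemma csummMl a x : csumm x -> csumm (fun i => a * x i).
Proof.
move=> [h1 h2]; split.
  under eq_fun do rewrite ReM.
  by apply: summB; exact: summZ.
under eq_fun do rewrite ImM.
by apply: summD; exact: summZ.
Qed.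

Lemma csumMl a x : csumm x -> csum (fun i => a * x i) = a * csum x.
Proof.
move=> [h1 h2]; apply: cext; rewrite ?ReM ?ImM /csum /=.
  under eq_fun do rewrite ReM.
  have -> : (fun i => complex.Re a * complex.Re (x i) - complex.Im a * complex.Im (x i))
     = (fun i => complex.Re a * complex.Re (x i)) \+ (fun i => (- complex.Im a) * complex.Im (x i)).
    by apply/funext => i /=; rewrite mulNr.
  rewrite rsumD ?rsumZ //; first by rewrite mulNr.
    exact: summZ.
  exact: summZ.
under eq_fun do rewrite ImM.
rewrite (rsumD (x := fun i => complex.Re a * complex.Im (x i))); try exact: summZ.
by rewrite !rsumZ.
Qed.

Lemma csumMr a x : csumm x -> csum (fun i => x i * a) = csum x * a.
Proof.
move=> h; under eq_fun do rewrite mulrC.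
by rewrite csumMl // mulrC.
Qed.

Lemma csummN x : csumm x -> csumm (fun i => - x i).
Proof.
move=> h; have := csummMl (-1) h.
by under eq_fun do rewrite mulN1r.
Qed.

Lemma csumB x y : csumm x -> csumm y -> csum (fun i => x i - y i) = csum x - csum y.
Proof.
move=> hx hy; rewrite csumD //; last exact: csummN.
have := csumMl (-1) hy; under eq_fun do rewrite mulN1r.
by move=> ->; rewrite mulN1r.
Qed.

Lemma csum_fin x A0 : (forall i, i \notin A0 -> x i = 0) ->
  csum x = \sum_(i <- A0) x i.
Proof.
move=> h; apply: cext; rewrite ?Re_sum ?Im_sum /csum /=.
  by apply: rsum_fin => i /h ->.
by apply: rsum_fin => i /h ->.
Qed.

Lemma csumm_fin x A0 : (forall i, i \notin A0 -> x i = 0) -> csumm x.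
Proof.
move=> h; split.
  exists (\sum_(i <- A0) `|complex.Re (x i)|) => A.
  apply: le_trans (sum_mono (fsubsetUl A A0) _) _ => //.
  by rewrite -(big_fset_incl _ (fsubsetUr A A0)) // => i _ /h ->; rewrite Re0 normr0.
exists (\sum_(i <- A0) `|complex.Im (x i)|) => A.
apply: le_trans (sum_mono (fsubsetUl A A0) _) _ => //.
by rewrite -(big_fset_incl _ (fsubsetUr A A0)) // => i _ /h ->; rewrite Im0 normr0.
Qed.

Lemma csumm_sum (T : Type) (L : seq T) (F : T -> I -> C) :
  (forall n, csumm (F n)) -> csumm (fun i => \sum_(n <- L) F n i).
Proof.
move=> h; elim: L => [|a L IH].
  under eq_fun do rewrite big_nil.
  by apply: (csumm_fin (A0 := fset0)).
under eq_fun do rewrite big_cons.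
exact: csummD.
Qed.

Lemma csum_sum (T : Type) (L : seq T) (F : T -> I -> C) :
  (forall n, csumm (F n)) ->
  csum (fun i => \sum_(n <- L) F n i) = \sum_(n <- L) csum (F n).
Proof.
move=> h; elim: L => [|a L IH].
  under eq_fun do rewrite big_nil.
  by rewrite big_nil (csum_fin (A0 := fset0)) ?big_nil.
under eq_fun do rewrite big_cons.
by rewrite csumD ?big_cons ?IH //; exact: csumm_sum.
Qed.

Lemma l2_ReIm u v Mu Mv t s : l2 u Mu -> l2 v Mv -> 0 < t -> 0 < s -> t * s = 1 ->
  forall A, \sum_(i <- A) `|complex.Re (u i * v i)| <= (t * Mu + s * Mv) / 2 /\
            \sum_(i <- A) `|complex.Im (u i * v i)| <= (t * Mu + s * Mv) / 2.
Proof.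
move=> hu hv t0 s0 ts A.
have e : \sum_(i <- A) (t * sqn (u i) + s * sqn (v i)) / 2 <= (t * Mu + s * Mv) / 2.
  rewrite -mulr_suml big_split /= -!mulr_sumr.
  have su : 0 <= \sum_(i <- A) sqn (u i) by apply: sumr_ge0 => i _; exact: sqn_ge0.
  have sv : 0 <= \sum_(i <- A) sqn (v i) by apply: sumr_ge0 => i _; exact: sqn_ge0.
  have h1 := hu A; have h2 := hv A; nra.
split; apply: le_trans e; apply: ler_sum => i _.
  exact: ReM_le.
exact: ImM_le.
Qed.

Lemma csumm_l2 u v Mu Mv : l2 u Mu -> l2 v Mv -> csumm (fun i => u i * v i).
Proof.
move=> hu hv.
have h := l2_ReIm hu hv ltr01 ltr01 (mulr1 1).
by split; exists ((1 * Mu + 1 * Mv) / 2) => A; case: (h A).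
Qed.

Lemma csum_l2_bound u v Mu Mv t s : l2 u Mu -> l2 v Mv -> 0 < t -> 0 < s -> t * s = 1 ->
  `|complex.Re (csum (fun i => u i * v i))| <= (t * Mu + s * Mv) / 2 /\
  `|complex.Im (csum (fun i => u i * v i))| <= (t * Mu + s * Mv) / 2.
Proof.
move=> hu hv t0 s0 ts; have h := l2_ReIm hu hv t0 s0 ts.
by split; rewrite /csum /=; apply: rsum_abs_le => A; case: (h A).
Qed.

Lemma csumm_cvg x : csumm x ->
  (fun A => complex.Re (\sum_(i <- A) x i)) @ totally --> complex.Re (csum x) /\
  (fun A => complex.Im (\sum_(i <- A) x i)) @ totally --> complex.Im (csum x).
Proof.
move=> [h1 h2]; split.
  under eq_fun do rewrite Re_sum; exact: summ_cvg.
under eq_fun do rewrite Im_sum; exact: summ_cvg.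
Qed.

End CS.

Section KER.
Variables (R : realType) (I : choiceType).
Local Notation C := R[i].
Local Open Scope complex_scope.
Implicit Types (f G : I -> C) (K : I -> I -> C).

Definition kapp K f n := csum (fun m => K n m * f m).
Definition rowl2 K Mr := forall n, l2 (K n) Mr.
Definition kbnd K M := forall (J L : {fset I}) (a : I -> C),
  \sum_(n <- L) sqn (\sum_(m <- J) K n m * a m) <= M * \sum_(m <- J) sqn (a m).

Lemma kapp_summ K Mr f Mf : rowl2 K Mr -> l2 f Mf -> forall n, csumm (fun m => K n m * f m).
Proof. by move=> hK hf n; exact: csumm_l2 (hK n) hf. Qed.

Lemma kapp_l2 K Mr M f Mf : rowl2 K Mr -> kbnd K M -> l2 f Mf -> 0 <= M ->
  l2 (kapp K f) (M * Mf).
Proof.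
move=> hK hM hf M0 L.
set F := fun n J => complex.Re (\sum_(m <- J) K n m * f m) ^+ 2
                  + complex.Im (\sum_(m <- J) K n m * f m) ^+ 2.
have hc : (fun J => \sum_(n <- L) F n J) @ totally --> \sum_(n <- L) sqn (kapp K f n).
  apply: cvg_bigsum => n.
  have [h1 h2] := csumm_cvg (kapp_summ hK hf n).
  rewrite /F /sqn !expr2.
  by apply: cvgD; apply: cvgM.
apply: (cvg_le hc) => J.
apply: le_trans (hM J L f) _.
by apply: ler_wpM2l => //; exact: hf.
Qed.

Definition cut G (L : {fset I}) n := if n \in L then 0 else G n.

Lemma tail_l2 G MG : l2 G MG -> forall e, 0 < e ->
  exists L0 : {fset I}, forall L, (L0 `<=` L)%fset -> l2 (cut G L) e.
Proof.
move=> hG e e0.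
set E := range (partial_sum (fun n => sqn (G n))).
have hs : has_sup E.
  split; first by exists (partial_sum (fun n => sqn (G n)) fset0); exists fset0.
  by exists MG => _ [A _ <-]; exact: hG.
have [_ [L0 _ <-] hL0] := sup_adherent e0 hs.
exists L0 => L L0L A.
have h1 : partial_sum (fun n => sqn (G n)) (A `|` L)%fset <= sup E.
  by apply: sup_upper_bound => //; exists (A `|` L)%fset.
have h2 : partial_sum (fun n => sqn (G n)) L0 <= partial_sum (fun n => sqn (G n)) L.
  by apply: sum_mono => // n; exact: sqn_ge0.
have h3 : \sum_(n <- A) sqn (cut G L n) <= \sum_(n <- (A `|` L)%fset) sqn (cut G L n).
  by apply: sum_mono; [exact: fsubsetUl | move=> n; exact: sqn_ge0].
have h4 : partial_sum (fun n => sqn (G n)) (A `|` L)%fset =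
   \sum_(n <- (A `|` L)%fset) sqn (cut G L n) + partial_sum (fun n => sqn (G n)) L.
  have e1 : \sum_(n <- L) sqn (G n) =
      \sum_(n <- (A `|` L)%fset) (if n \in L then sqn (G n) else 0).
    rewrite -(big_fset_incl _ (fsubsetUr A L)); last by move=> n _ /negbTE ->.
    by rewrite big_seq_cond [RHS]big_seq_cond; apply: eq_bigr => n /andP[->].
  rewrite /partial_sum e1 -big_split /=; apply: eq_bigr => n _; rewrite /cut.
  by case: ifP => _; rewrite /sqn ?Re0 ?Im0; ring.
rewrite /partial_sum in h1 h2 h4 hL0; lra.
Qed.

Lemma l2_cut G MG L : l2 G MG -> l2 (cut G L) MG.
Proof.
move=> hG A; apply: le_trans (hG A); apply: ler_sum => n _; rewrite /cut.
by case: ifP => _ //; rewrite /sqn Re0 Im0 expr0n /= addr0; exact: sqn_ge0.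
Qed.

Lemma l2_ge0 G MG : l2 G MG -> 0 <= MG.
Proof. by move=> h; have := h fset0; rewrite big_nil. Qed.

Lemma csumm_ext (x y : I -> C) : (forall i, x i = y i) -> csumm x -> csumm y.
Proof. by move=> h; have -> : x = y by apply/funext. Qed.

Lemma kadj K Kt Mr M Mr' M' f G Mf MG :
  rowl2 K Mr -> kbnd K M -> rowl2 Kt Mr' -> kbnd Kt M' -> (forall n m, Kt m n = K n m) ->
  l2 f Mf -> l2 G MG -> 0 <= M -> 0 <= M' ->
  csum (fun n => kapp K f n * G n) = csum (fun m => f m * kapp Kt G m).
Proof.
move=> hK hM hKt hM' eK hf hG M0 M'0.
set Rt := csum (fun m => f m * kapp Kt G m).
have E : forall L : {fset I}, Rt - \sum_(n <- L) kapp K f n * G n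
                          = csum (fun m => f m * kapp Kt (cut G L) m).
  move=> L.
  have hS : csumm (fun m => f m * \sum_(n <- L) Kt m n * G n).
    apply: (csumm_ext (x := fun m => \sum_(n <- L) G n * (K n m * f m))).
      by move=> m; rewrite mulr_sumr; apply: eq_bigr => n _; rewrite eK; ring.
    apply: csumm_sum => n; apply: csummMl; exact: kapp_summ hK hf n.
  have E1 : \sum_(n <- L) kapp K f n * G n = csum (fun m => f m * \sum_(n <- L) Kt m n * G n).
    transitivity (\sum_(n <- L) csum (fun m => G n * (K n m * f m))).
      apply: eq_bigr => n _; rewrite mulrC /kapp csumMl //; exact: kapp_summ hK hf n.
    rewrite -csum_sum; last by move=> n; apply: csummMl; exact: kapp_summ hK hf n.
    congr csum; apply/funext => m; rewrite mulr_sumr; apply: eq_bigr => n _; rewrite eK; ring.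
  have E2 : forall m, kapp Kt G m = kapp Kt (cut G L) m + \sum_(n <- L) Kt m n * G n.
    move=> m.
    have -> : \sum_(n <- L) Kt m n * G n = \sum_(n <- L) Kt m n * (if n \in L then G n else 0).
      by rewrite big_seq_cond [in X in _ = X]big_seq_cond; apply: eq_bigr => n /andP[->].
    rewrite -(csum_fin (A0 := L) (x := fun n => Kt m n * (if n \in L then G n else 0))); last first.
      by move=> n /negbTE ->; rewrite mulr0.
    rewrite /kapp -csumD.
    - by congr csum; apply/funext => n; rewrite /cut; case: ifP => _; ring.
    - exact: csumm_l2 (hKt m) (l2_cut L hG).
    - by apply: (csumm_fin (A0 := L)) => n /negbTE ->; rewrite mulr0.
  rewrite E1 /Rt -csumB //; last first.
    exact: csumm_l2 hf (kapp_l2 hKt hM' hG M'0).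
  by congr csum; apply/funext => m; rewrite (E2 m); ring.
have Mf0 := l2_ge0 hf.
have key : forall e, 0 < e -> \forall L \near totally,
    `|complex.Re (csum (fun m => f m * kapp Kt (cut G L) m))| <= e /\
    `|complex.Im (csum (fun m => f m * kapp Kt (cut G L) m))| <= e.
  move=> e e0.
  set t := e / (Mf + 1).
  have t0 : 0 < t by apply: divr_gt0 => //; lra.
  have ht : t * (Mf + 1) = e by rewrite /t divfK //; apply: lt0r_neq0; lra.
  set s := t^-1.
  have s0 : 0 < s by rewrite /s invr_gt0.
  have ts : t * s = 1 by rewrite /s divff // lt0r_neq0.
  set e' := e * t / (M' + 1).
  have e'0 : 0 < e' by apply: divr_gt0; [apply: mulr_gt0 | lra].
  have he' : e' * (M' + 1) = e * t by rewrite /e' divfK //; apply: lt0r_neq0; lra.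
  have [L0 hL0] := tail_l2 hG e'0.
  apply: (near_tot (A := L0)) => L L0L.
  have hk := kapp_l2 hKt hM' (hL0 L L0L) M'0.
  have [b1 b2] := csum_l2_bound hf hk t0 s0 ts.
  have bnd : (t * Mf + s * (M' * e')) / 2 <= e.
    have q1 : t * Mf <= e by nra.
    have q2 : M' * e' <= e * t by nra.
    have q3 : s * (M' * e') <= s * (e * t) by apply: ler_wpM2l => //; exact: ltW.
    have q4 : s * (e * t) = e by rewrite mulrCA (mulrC s) ts mulr1.
    lra.
  by split; apply: le_trans bnd.
have hX : csumm (fun n => kapp K f n * G n) := csumm_l2 (kapp_l2 hK hM hf M0) hG.
apply: cext; rewrite /csum /=.
  apply: rsum_lim; apply/cvgrPdist_le => e e0.
  apply: filterS (key e e0) => L [h _].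
  have -> : complex.Re Rt - partial_sum (fun i => complex.Re (kapp K f i * G i)) L
      = complex.Re (Rt - \sum_(n <- L) kapp K f n * G n) by rewrite ReD ReN Re_sum.
  by rewrite E.
apply: rsum_lim; apply/cvgrPdist_le => e e0.
apply: filterS (key e e0) => L [_ h].
have -> : complex.Im Rt - partial_sum (fun i => complex.Im (kapp K f i * G i)) L
    = complex.Im (Rt - \sum_(n <- L) kapp K f n * G n) by rewrite ImD ImN Im_sum.
by rewrite E.
Qed.

End KER.

Section MAIN.
Variables (R : realType) (d : nat).
Local Notation C := R[i].
Local Notation I := (mnat d).
Local Open Scope complex_scope.

Definition hat (n : I) : mint d := mint_of_nat n.

Lemma hat_inj : injective hat.
Proof.
move=> x y /ffunP h; apply/ffunP => j; have := h j; rewrite !ffunE.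
by case.
Qed.

Lemma msub_injl (N : mint d) : injective (fun m : I => msub N (hat m)).
Proof.
move=> x y /ffunP h; apply/ffunP => j; have := h j; rewrite !ffunE => e.
have : (x j)%:Z = (y j)%:Z by apply: oppr_inj; apply: (addrI (N j)).
by case.
Qed.

Lemma msub_injr (N : mint d) : injective (fun m : I => msub (hat m) N).
Proof.
move=> x y /ffunP h; apply/ffunP => j; have := h j; rewrite !ffunE => e.
have : (x j)%:Z = (y j)%:Z by apply: (addIr (- N j)).
by case.
Qed.

Definition zero_mint : mint d := [ffun => 0].

Lemma msub0 (k : mint d) : msub k zero_mint = k.
Proof. by apply/ffunP => j; rewrite !ffunE subr0. Qed.

Lemma mopp_msub (x y : mint d) : mopp (msub x y) = msub y x.
Proof. by apply/ffunP => j; rewrite !ffunE opprB. Qed.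

Lemma mdot_msub (x y : mint d) (th : 'I_d -> R) : mdot (msub x y) th = mdot x th - mdot y th.
Proof.
rewrite /mdot -sumrB; apply: eq_bigr => j _; rewrite ffunE intrB; ring.
Qed.

Lemma sqn1 : sqn (1 : C) = 1. Proof. by rewrite /sqn Re1 Im1; ring. Qed.
Lemma sqn0 : sqn (0 : C) = 0. Proof. by rewrite /sqn Re0 Im0; ring. Qed.

Variable c : mint d -> C.

Definition Kc (n m : I) := c (msub (hat n) (hat m)).
Definition Ktc (m n : I) := Kc n m.

Lemma Linf_ge0 M : Linfty_coeffs c -> (forall (a : mint d -> C) (J K : {fset mint d}), \sum_(n <- K) sqn (\sum_(m <- J) c (msub n m) * a m)
      <= M * \sum_(m <- J) sqn (a m)) -> 0 <= M.
Proof.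
move=> _ h.
have := h (fun _ => 1) [fset zero_mint]%fset fset0.
rewrite big_nil !big_seq_fset1 sqn1 mulr1; done.
Qed.

Lemma reindex_row M (h : I -> mint d) : injective h ->
  (forall (a : mint d -> C) (J K : {fset mint d}), \sum_(n <- K) sqn (\sum_(m <- J) c (msub n m) * a m)
      <= M * \sum_(m <- J) sqn (a m)) ->
  forall A : {fset I}, \sum_(n <- A) sqn (c (h n)) <= M.
Proof.
move=> hi hM A.
have := hM (fun j => if j == zero_mint then 1 else 0) [fset zero_mint]%fset [fset h n | n in A]%fset.
rewrite !big_seq_fset1 eqxx sqn1 mulr1 big_imfset /=; last by move=> x y _ _ /hi.
by under eq_bigr do rewrite big_seq_fset1 eqxx msub0 mulr1.
Qed.

Lemma kbnd_Kc M : (forall (a : mint d -> C) (J K : {fset mint d}), \sum_(n <- K) sqn (\sum_(m <- J) c (msub n m) * a m)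
      <= M * \sum_(m <- J) sqn (a m)) -> kbnd Kc M.
Proof.
move=> hM J L a.
pose toN (j : mint d) : I := [ffun i => `|j i|%N].
have toNK : forall n, toN (hat n) = n by move=> n; apply/ffunP => i; rewrite !ffunE.
have := hM (fun j => a (toN j)) [fset hat m | m in J]%fset [fset hat n | n in L]%fset.
rewrite big_imfset /=; last by move=> x y _ _ /hat_inj.
rewrite [in X in _ <= _ * X]big_imfset /=; last by move=> x y _ _ /hat_inj.
have ri : forall F : mint d -> C, \sum_(m <- [fset hat m | m in J]%fset) F m = \sum_(m <- J) F (hat m).
  by move=> F; rewrite big_imfset // => x y _ _ /hat_inj.
under eq_bigr do rewrite ri.
by under eq_bigr do under eq_bigr do rewrite toNK; under [in X in _ <= _ * X]eq_bigr do rewrite toNK.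
Qed.


Lemma rowl2_Kc M : (forall (a : mint d -> C) (J K : {fset mint d}), \sum_(n <- K) sqn (\sum_(m <- J) c (msub n m) * a m)
      <= M * \sum_(m <- J) sqn (a m)) -> rowl2 Kc M.
Proof. by move=> hM n; apply: reindex_row hM; exact: msub_injl. Qed.

Lemma rowl2_Ktc M : (forall (a : mint d -> C) (J K : {fset mint d}), \sum_(n <- K) sqn (\sum_(m <- J) c (msub n m) * a m)
      <= M * \sum_(m <- J) sqn (a m)) -> rowl2 Ktc M.
Proof. by move=> hM n; apply: reindex_row hM; exact: msub_injr. Qed.

Variable th : 'I_d -> R.

Lemma sqn_expiM a (z : C) : sqn (expi a * z) = sqn z.
Proof. by rewrite sqnM sqn_expi mul1r. Qed.

Lemma Ktc_cond (cond : forall k, expi (mdot k th) * c k = c (mopp k)) n m :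
  Ktc n m = expi (mdot (hat n) th) * (expi (- mdot (hat m) th) * Kc n m).
Proof.
rewrite /Ktc /Kc -mopp_msub -cond mdot_msub expiD; ring.
Qed.

Lemma kbnd_Ktc M (cond : forall k, expi (mdot k th) * c k = c (mopp k)) :
  kbnd Kc M -> kbnd Ktc M.
Proof.
move=> hK J L a.
have := hK J L (fun m => expi (- mdot (hat m) th) * a m).
under [in X in _ <= _ * X]eq_bigr do rewrite sqn_expiM.
move=> h; apply: le_trans h; rewrite le_eqVlt; apply/orP; left; apply/eqP.
apply: eq_bigr => n _.
rewrite -[X in _ = X](sqn_expiM (mdot (hat n) th)) mulr_sumr; congr sqn; apply: eq_bigr => m _.
rewrite Ktc_cond //; ring.
Qed.

End MAIN.

Section FIN.
Variables (R : realType) (d : nat).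
Local Notation C := R[i].
Local Notation I := (mnat d).
Local Open Scope complex_scope.

Lemma conjM (z w : C) : conjc (z * w) = conjc z * conjc w.
Proof. by apply: cext; rewrite !cE; ring. Qed.
Lemma conjK (z : C) : conjc (conjc z) = z.
Proof. by apply: cext; rewrite !cE ?opprK. Qed.
Lemma conj1 : conjc (1 : C) = 1. Proof. by apply: cext; rewrite !cE ?oppr0. Qed.
Lemma conj0 : conjc (0 : C) = 0. Proof. by apply: cext; rewrite !cE ?oppr0. Qed.

Lemma CthxiK (th xi : 'I_d -> R) (h : I -> C) : Cthxi th xi (Cthxi th xi h) = h.
Proof.
apply/funext => k; rewrite /Cthxi !conjM conjK !expiJ opprK.
transitivity ((expi (\sum_(j < d) xi j) * expi (- \sum_(j < d) xi j)) *
   (h k * (expi (mdot (mint_of_nat k) th) * expi (- mdot (mint_of_nat k) th)))); first by ring.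
by rewrite !expiN1 mul1r mulr1.
Qed.

Lemma CthxiJ (th xi : 'I_d -> R) (h : I -> C) k :
  conjc (Cthxi th xi h k) = expi (- \sum_(j < d) xi j) * h k * expi (mdot (mint_of_nat k) th).
Proof. by rewrite /Cthxi !conjM conjK !expiJ opprK. Qed.

Lemma l2_C (th xi : 'I_d -> R) (h : I -> C) M : l2 h M -> l2 (Cthxi th xi h) M.
Proof.
move=> hh A; apply: le_trans (hh A); rewrite le_eqVlt; apply/orP; left; apply/eqP.
by apply: eq_bigr => k _; rewrite /Cthxi !sqnM !sqn_expi sqnJ mul1r mulr1.
Qed.

Definition ev (n : I) : I -> C := fun k => if k == n then 1 else 0.

Lemma l2_ev n : l2 (ev n) 1.
Proof.
move=> A; apply: le_trans (sum_mono (fsubsetUl A [fset n]%fset) _) _.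
  by move=> i; exact: sqn_ge0.
rewrite -(big_fset_incl _ (fsubsetUr A [fset n]%fset)).
  by rewrite big_seq_fset1 /ev eqxx sqn1.
by move=> x _; rewrite in_fset1 /ev => /negbTE ->; rewrite sqn0.
Qed.

Lemma csum1 (x : I -> C) n : (forall k, k != n -> x k = 0) -> csum x = x n.
Proof.
move=> h; rewrite (csum_fin (A0 := [fset n]%fset)) ?big_seq_fset1 //.
by move=> i; rewrite in_fset1; exact: h.
Qed.

End FIN.
Arguments ev {R d} n.
Arguments l2_ev {R d} n.

Theorem theorem9p6 (R : realType) (d : nat) (hd : (2 <= d)%N)
  (theta xi : 'I_d -> R) (c : mint d -> R[i]) (hc : Linfty_coeffs c) :
  C_symmetric (Cthxi theta xi) (toeplitz c) <->
  (forall k : mint d, expi (mdot k theta) * c k = c (mopp k)).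
Proof.
have hc' := hc; case: hc' => M hM.
have M0 : 0 <= M := Linf_ge0 hc hM.
set al := \sum_(j < d) xi j.
have eal : expi al * expi (- al) = 1 by exact: expiN1.
split.
- case=> Ts [[hS hadj] hC] k.
  pose np : mnat d := [ffun j => if (0 <= k j)%R then `|k j|%N else 0%N].
  pose nm : mnat d := [ffun j => if (0 <= k j)%R then 0%N else `|k j|%N].
  have hk : msub (hat np) (hat nm) = k.
    apply/ffunP => j; rewrite !ffunE; case: ifP => h.
      by rewrite subr0 gez0_abs.
    rewrite sub0r ltz0_abs ?opprK //; rewrite ltNge h //.
  rewrite /hat in hk.
  have He : forall n : mnat d, in_H2 (ev (R:=R) n) := fun n => ex_intro _ 1 (l2_ev n).
  have HCe : forall n, in_H2 (Cthxi theta xi (ev n)) :=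
    fun n => ex_intro _ 1 (l2_C theta xi (l2_ev n)).
  have Tev : forall n m, toeplitz c (ev n) m = c (msub (mint_of_nat m) (mint_of_nat n)).
    move=> n m; rewrite /toeplitz (csum1 (n := n)) /ev ?eqxx ?mulr1 // => k' /negbTE ->.
    by rewrite mulr0.
  have Cev : forall n k', Cthxi theta xi (ev n) k' =
      if k' == n then expi al * expi (- mdot (mint_of_nat n) theta) else 0.
    move=> n k'; rewrite /Cthxi /ev; case: eqP => [->|_].
      by rewrite conj1 mulr1.
    by rewrite conj0 mulr0 mul0r.
  set z := Ts (Cthxi theta xi (ev np)).
  have L1 : inner (toeplitz c (ev nm)) (Cthxi theta xi (ev np)) =
      c (msub (mint_of_nat np) (mint_of_nat nm)) * conjc (expi al * expi (- mdot (mint_of_nat np) theta)).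
    rewrite /inner (csum1 (n := np)); first by rewrite Tev Cev eqxx.
    by move=> k' /negbTE h; rewrite Cev h conj0 mulr0.
  have L2 : inner (ev nm) z = conjc (z nm).
    rewrite /inner (csum1 (n := nm)); first by rewrite /ev eqxx mul1r.
    by move=> k' /negbTE h; rewrite /ev h mul0r.
  have H1 := hadj (ev nm) (Cthxi theta xi (ev np)) (He nm) (HCe np).
  rewrite L1 L2 in H1.
  have H2 : Cthxi theta xi z nm = toeplitz c (ev np) nm by rewrite hC.
  rewrite /Cthxi Tev -H1 in H2.
  rewrite -hk mopp_msub -H2 conjM !expiJ opprK mdot_msub expiD.
  transitivity ((expi al * expi (- al)) * (expi (mdot (mint_of_nat np) theta) *
     expi (- mdot (mint_of_nat nm) theta) * c (msub (mint_of_nat np) (mint_of_nat nm)))).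
    by rewrite eal mul1r.
  ring.
- move=> cond.
  have hK := rowl2_Kc hM; have hKb := kbnd_Kc hM.
  have hKt := rowl2_Ktc hM; have hKtb := kbnd_Ktc cond hKb.
  exists (fun g => Cthxi theta xi (toeplitz c (Cthxi theta xi g))); split; [split|].
  + move=> g [Mg hg]; exists (M * Mg); apply: l2_C.
    exact: (kapp_l2 hK hKb (l2_C theta xi hg) M0).
  + move=> f g [Mf hf] [Mg hg]; rewrite /inner.
    have e : forall m, conjc (Cthxi theta xi (toeplitz c (Cthxi theta xi g)) m)
                    = kapp (Ktc c) (fun n => conjc (g n)) m.
      move=> m; rewrite CthxiJ /toeplitz.
      have hs := kapp_summ hK (l2_C theta xi hg) m.
      rewrite -csumMl // -csumMr; last exact: csummMl.
      rewrite /kapp; congr csum; apply/funext => n.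
      rewrite (Ktc_cond cond) /Kc /hat /Cthxi.
      transitivity ((expi al * expi (- al)) *
        (expi (mdot (mint_of_nat m) theta) * (expi (- mdot (mint_of_nat n) theta) *
          c (msub (mint_of_nat m) (mint_of_nat n))) * conjc (g n))); last by rewrite eal mul1r.
      rewrite /al; ring.
    under [in X in _ = X]eq_fun do rewrite e.
    have hG : l2 (fun n => conjc (g n)) Mg.
      by move=> A; apply: le_trans (hg A); under eq_bigr do rewrite sqnJ.
    exact: (kadj hK hKb hKt hKtb (fun n m => erefl) hf hG M0 M0).
  + by move=> f _; rewrite !CthxiK.
Qed.
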